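(* Let $T\ge 1$, $\ell\ge 0$ and $N\ge 1$ be integers. There exists a $(T,N,1)$-tropical code within maximum delay $\ell$ if and only if $N\le(\ell+2)^T-(\ell+1)^T$.
   Context: Tropical arithmetic on $\mathbb{R}\cup\{\infty\}$: $x\oplus y=\min(x,y)$, $x\odot y=x+y$, with $x\oplus\infty=x$ and $x\odot\infty=\infty$. For a matrix $S$ with $T$ rows and $N$ columns and a column vector $\mathbf{x}$ of length $N$, $S\odot\mathbf{x}$ is the vector whose $t$-th entry is $\min_{j}(S_{tj}+x_j)$. A $(T,N,D)$-tropical code is a matrix $S\in(\{0\}\cup\mathbb{N}\cup\{\infty\})^{T\times N}$ such that for any two distinct vectors $\mathbf{x},\mathbf{y}\in(\{0\}\cup\mathbb{N}\cup\{\infty\})^{N}$, each having at most $D$ finite entries, $S\odot\mathbf{x}\ne S\odot\mathbf{y}$. It is within maximum delay $\ell$ if $S\in\{0,1,\dots,\ell,\infty\}^{T\times N}$. *)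

(* Defs.v *)
From mathcomp Require Import all_boot.
Set Implicit Arguments. Unset Strict Implicit. Unset Printing Implicit Defensive.

(* Tropical semiring on {0} ∪ N ∪ {∞}: [Some n] is the natural number n,
   [None] is ∞. *)
Definition trop := option nat.

Definition tplus (x y : trop) : trop :=
  match x, y with
  | None, _ => y
  | _, None => x
  | Some a, Some b => Some (minn a b)
  end.

Definition ttimes (x y : trop) : trop :=
  match x, y with
  | Some a, Some b => Some (a + b)
  | _, _ => None
  end.

Definition tmatvec (T N : nat) (S : {ffun 'I_T * 'I_N -> trop})
  (x : {ffun 'I_N -> trop}) : {ffun 'I_T -> trop} :=
  [ffun t => foldr (fun j acc => tplus (ttimes (S (t, j)) (x j)) acc) None
               (enum 'I_N)].

Definition nfinite (N : nat) (x : {ffun 'I_N -> trop}) : nat :=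
  #|[pred j | x j != None]|.

Definition tropical_code (T N D : nat) (S : {ffun 'I_T * 'I_N -> trop}) : Prop :=
  forall x y : {ffun 'I_N -> trop},
    nfinite x <= D -> nfinite y <= D -> x <> y ->
    tmatvec S x <> tmatvec S y.

Definition within_delay (T N l : nat) (S : {ffun 'I_T * 'I_N -> trop}) : Prop :=
  forall i, if S i is Some a then a <= l else true.

(* Main.v *)
Require Import Defs.
From mathcomp Require Import all_boot.
From mathcomp Require Import zify.
Set Implicit Arguments. Unset Strict Implicit. Unset Printing Implicit Defensive.

Definition evec {N : nat} (j : 'I_N) (a : nat) : {ffun 'I_N -> trop} :=
  [ffun k => if k == j then Some a else None].
Definition zvec (N : nat) : {ffun 'I_N -> trop} := [ffun _ => None].

Lemma tmv_e T N (S : {ffun 'I_T * 'I_N -> trop}) (j : 'I_N) a t :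
  tmatvec S (evec j a) t = ttimes (S (t, j)) (Some a).
Proof.
rewrite /tmatvec ffunE.
have : j \in enum 'I_N by rewrite mem_enum.
have gen : forall s, foldr (fun j0 acc => tplus (ttimes (S (t, j0)) (evec j a j0)) acc)
   None s = if j \in s then ttimes (S (t, j)) (Some a) else None.
  elim=> [|k s IH] //=. rewrite IH inE ffunE. case: eqP => [->|ne].
    rewrite eqxx /=; case: (j \in s); case: (S (t, j)) => //= b; by rewrite minnn.
  have -> : (j == k) = false by apply/eqP => e; apply: ne; rewrite e.
  by case: (S (t, k)).
by move=> hj; rewrite gen hj.
Qed.

Lemma tmv_z T N (S : {ffun 'I_T * 'I_N -> trop}) t :
  tmatvec S (zvec N) t = None.
Proof.
rewrite /tmatvec ffunE. elim: (enum 'I_N) => //= k s ->. rewrite ffunE.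
by case: (S (t, k)).
Qed.

Lemma nfin_e N (j : 'I_N) a : nfinite (evec j a) <= 1.
Proof.
rewrite /nfinite.
have h : [pred k | evec j a k != None] \subset pred1 j.
  apply/subsetP => k. rewrite !inE ffunE. by case: (k == j).
by rewrite (leq_trans (subset_leq_card h)) ?card1.
Qed.

Lemma nfin_z N : nfinite (zvec N) <= 1.
Proof.
rewrite /nfinite.
have h : [pred k | zvec N k != None] \subset pred0.
  apply/subsetP => k. by rewrite !inE ffunE.
by rewrite (leq_trans (subset_leq_card h)) ?card0.
Qed.

Lemma decomp N (x : {ffun 'I_N -> trop}) :
  nfinite x <= 1 -> x = zvec N \/ exists j a, x = evec j a.
Proof.
rewrite /nfinite => /card_le1P H.
case: (pickP [pred j | x j != None]) => [j Hj | H0].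
  right. have Hj' := H j Hj. move: Hj; rewrite inE; case Ex: (x j) => [a|] // _.
  exists j, a. apply/ffunP => k; rewrite ffunE. case: eqP => [->//|ne].
  case Exk: (x k) => [b|] //. exfalso. apply: ne.
  have : k \in [pred j | x j != None] by rewrite inE Exk.
  by rewrite Hj' => /eqP.
left. apply/ffunP => k; rewrite ffunE. move: (H0 k) => /=. by case: (x k).
Qed.

Lemma fmin_le l s x : x \in s -> foldr minn l s <= x.
Proof.
elim: s => //= y s IH. rewrite inE => /orP [/eqP ->| /IH h].
  exact: geq_minl.
exact: leq_trans (geq_minr _ _) h.
Qed.

Lemma fmin_in l s : foldr minn l s = l \/ foldr minn l s \in s.
Proof.
elim: s => [|y s IH] /=; first by left.
case: (leqP y (foldr minn l s)) => h.
  by right; rewrite inE eqxx.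
case: IH => [->|h2]; first by left.
by right; rewrite inE h2 orbT.
Qed.

Definition Aset l T : {set {ffun 'I_T -> option 'I_l.+1}} :=
  [set v : {ffun 'I_T -> option 'I_l.+1} | [exists t : 'I_T, v t == Some ord0]].

Lemma cardA l T : #|Aset l T| = (l+2)^T - (l+1)^T.
Proof.
have H := cardsC (Aset l T).
rewrite card_ffun card_option !card_ord in H.
have E : #|~: Aset l T| = (l+1)^T.
  have -> : (l+1)^T = #|predC1 (Some (@ord0 l))| ^ #|'I_T|.
    by rewrite cardC1 card_option !card_ord addn1.
  rewrite -(@card_ffun_on 'I_T _ (predC1 (Some (@ord0 l)))).
  apply: eq_card => v. rewrite !inE negb_exists.
  apply/forallP/ffun_onP => h t; move: (h t); by rewrite !inE.
rewrite E in H. by rewrite addn2 -H addnK.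
Qed.

Theorem mainTheorem3 (T l N : nat) :
  1 <= T -> 1 <= N ->
  (exists S : {ffun 'I_T * 'I_N -> trop},
      tropical_code 1 S /\ within_delay l S) <->
  N <= (l + 2) ^ T - (l + 1) ^ T.
Proof.
move=> _ _; rewrite -cardA; split.
- case=> S [code del].
  have fin : forall j : 'I_N, exists t a, S (t, j) = Some a.
    move=> j. case: (pickP [pred t : 'I_T | S (t, j) != None]) => [t /= | H0].
      by case E: (S (t,j)) => [a|] // _; exists t, a.
    exfalso. apply: (code (zvec N) (evec j 0) (nfin_z N) (nfin_e j 0)).
      move=> e; move: (congr1 (fun f => fun_of_fin f j) e). by rewrite !ffunE eqxx.
    apply/ffunP => t. rewrite tmv_z tmv_e. move: (H0 t) => /=.
    by case: (S (t, j)).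
  pose m := fun j : 'I_N => foldr minn l [seq odflt l (S (t, j)) | t <- enum 'I_T].
  have mle : forall j t a, S (t,j) = Some a -> m j <= a.
    move=> j t a E. apply: fmin_le. apply/mapP. exists t; first by rewrite mem_enum.
    by rewrite E.
  have mex : forall j, exists t, S (t, j) = Some (m j).
    move=> j. have lcase : m j = l -> exists t, S (t,j) = Some (m j).
      move=> ml. case: (fin j) => t [a E]. exists t.
      have la := mle j t a E. have al : a <= l by move: (del (t,j)); rewrite E.
      rewrite E; congr Some; lia.
    case: (fmin_in l [seq odflt l (S (t, j)) | t <- enum 'I_T]) => [E|/mapP [t _ E]].
      by apply: lcase; exact: E.
    case E2: (S (t,j)) => [a|]; rewrite E2 /= in E.
      by exists t; rewrite E2 /m E.
    by apply: lcase; rewrite /m E.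
  pose nrm := fun j : 'I_N =>
    [ffun t => omap (fun a => @inord l (a - m j)) (S (t,j))] : {ffun 'I_T -> option 'I_l.+1}.
  have nrmA : forall j, nrm j \in Aset l T.
    move=> j; rewrite inE; apply/existsP. case: (mex j) => t E. exists t.
    rewrite /nrm ffunE E /=. apply/eqP; congr Some; apply: val_inj.
    by rewrite /= subnn inordK.
  have inj : injective nrm.
    move=> j k E. apply/eqP; apply/negPn/negP => njk.
    apply: (code (evec j (m k)) (evec k (m j)) (nfin_e _ _) (nfin_e _ _)).
      move=> e; move: (congr1 (fun f => fun_of_fin f j) e). by rewrite !ffunE eqxx (negbTE njk).
    apply/ffunP => t. rewrite !tmv_e. have := congr1 (fun f => fun_of_fin f t) E.
    rewrite /nrm !ffunE.
    case Ej: (S (t,j)) => [a|]; case Ek: (S (t,k)) => [b|] //=.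
    move=> [] /(congr1 val) /=.
    have h1 := mle j t a Ej; have h2 := mle k t b Ek.
    have h3 := del (t,j); have h4 := del (t,k).
    rewrite Ej /= in h3; rewrite Ek /= in h4.
    rewrite !inordK; try lia.
    move=> e; congr Some; lia.
  have -> : N = #|nrm @: [set: 'I_N]| by rewrite card_imset // cardsT card_ord.
  apply: subset_leq_card; apply/subsetP => v /imsetP [j _ ->]; exact: nrmA.
- move=> hN.
  pose A := Aset l T. pose v0 : {ffun 'I_T -> option 'I_l.+1} := [ffun _ => None].
  pose col := fun j : 'I_N => nth v0 (enum A) j.
  have sz : forall j : 'I_N, j < size (enum A).
    move=> j; rewrite -cardE; exact: leq_trans (ltn_ord j) hN.
  have colA : forall j, col j \in A.
    move=> j; rewrite -mem_enum; exact: mem_nth.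
  pose S := [ffun p : 'I_T * 'I_N => omap (@nat_of_ord _) (col p.2 p.1)]
     : {ffun 'I_T * 'I_N -> trop}.
  exists S; split; last first.
    move=> [t j]; rewrite /S ffunE /=. case: (col j t) => //= a. by rewrite -ltnS.
  have zero : forall j, exists t, S (t, j) = Some 0.
    move=> j. have := colA j; rewrite inE => /existsP [t /eqP E]. exists t.
    by rewrite /S ffunE /= E.
  move=> x y hx hy nxy heq.
  have ab : forall j k a b, (forall t, ttimes (S (t,j)) (Some a) = ttimes (S (t,k)) (Some b))
      -> b <= a.
    move=> j' k' a' b' Et'. case: (zero j') => t0 E0. move: (Et' t0). rewrite E0 /=.
    case: (S (t0,k')) => // c [e]; lia.
  have key : forall j k a b, tmatvec S (evec j a) = tmatvec S (evec k b) -> j = k /\ a = b.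
    move=> j k a b E.
    have Et : forall t, ttimes (S (t,j)) (Some a) = ttimes (S (t,k)) (Some b).
      by move=> t; rewrite -!tmv_e E.
    have eab : a = b.
      apply/eqP; rewrite eqn_leq (ab j k a b Et) (ab k j b a) //.
    split; last exact: eab.
    have ecol : col j = col k.
      apply/ffunP => t. have := Et t. rewrite /S !ffunE /=.
      case: (col j t) => [u|]; case: (col k t) => [w|] //= [e].
      by congr Some; apply/val_inj/eqP; rewrite /= -(eqn_add2r a) e eab.
    apply/val_inj/eqP; rewrite -(nth_uniq v0 (sz j) (sz k) (enum_uniq _)).
    by apply/eqP.
  case: (decomp hx) => [Ex|[j [a Ex]]]; case: (decomp hy) => [Ey|[k [b Ey]]]; rewrite Ex Ey in nxy heq.
  + by apply: nxy.
  + case: (zero k) => t E. move: (congr1 (fun f => fun_of_fin f t) heq) => /=.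
    by rewrite tmv_z tmv_e E.
  + case: (zero j) => t E. move: (congr1 (fun f => fun_of_fin f t) heq) => /=.
    by rewrite tmv_z tmv_e E.
  + case: (key _ _ _ _ heq) => e1 e2; apply: nxy; by rewrite e1 e2.
Qed.
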